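(* Let $n\in\mathbb{N}$ and suppose $n=\sum_{i=1}^{\ell}(-1)^{i-1}2^{\alpha_i}$ is an alternating binary representation of $n$. Then $\alpha_1=\lceil\log_2 n\rceil$ and, for each $i\in\{2,\dots,\ell\}$, \[ \alpha_i=\left\lceil \log_2\left((-1)^{i-1}\left(n-2^{\alpha_1}+2^{\alpha_2}-\cdots+(-1)^{i-1}2^{\alpha_{i-1}}\right)\right)\right\rceil . \] In particular, the alternating binary representation of $n$ is unique, and $(\alpha_2,\dots,\alpha_\ell)$ determines the alternating binary representation of $2^{\alpha_1}-n$.
   Context: An alternating binary representation (ABR) of $n\in\mathbb{N}$ is an expression $n=\sum_{i=1}^{\ell}(-1)^{i-1}2^{\alpha_i}$ with $\ell\ge 1$ and nonnegative integers $\alpha_1>\alpha_2>\cdots>\alpha_{\ell-1}>\alpha_\ell+1$; such $(\alpha_1,\dots,\alpha_\ell)$ is said to determine the ABR. *)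

(* Defs.v *)
From mathcomp Require Import all_boot all_order all_algebra.
Set Implicit Arguments. Unset Strict Implicit. Unset Printing Implicit Defensive.
Import Order.TTheory GRing.Theory Num.Theory.

(* An exponent sequence s = [:: a_1; ...; a_l] (0-based: a_{i+1} = nth 0 s i). *)

Definition abr_value (s : seq nat) : int :=
  (\sum_(i < size s) (-1) ^+ i * (2 ^ nth 0 s i)%:Z)%R.

Definition is_ABR (n : nat) (s : seq nat) : Prop :=
  [/\ 0 < size s,
      (forall i, i.+1 < size s -> nth 0 s i.+1 < nth 0 s i),
      (1 < size s -> (nth 0 s (size s).-1).+1 < nth 0 s (size s).-2)
    & (n%:Z = abr_value s)%R].

Definition ceil_log2 (m : nat) : nat := up_log 2 m.

(* For 0-based index i (paper's index i+1):
   (-1)^i * (n - 2^(a_1) + 2^(a_2) - ... + (-1)^i 2^(a_i)) *)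
Definition abr_rem (n : nat) (s : seq nat) (i : nat) : int :=
  ((-1) ^+ i * (n%:Z - \sum_(j < i) (-1) ^+ j * (2 ^ nth 0 s j)%:Z))%R.

(* Main.v *)
Require Import Defs.
From mathcomp Require Import all_boot all_order all_algebra zify.
Import Order.TTheory GRing.Theory Num.Theory.
Local Open Scope ring_scope.
Local Open Scope nat_scope.
Set Implicit Arguments.

Definition okabr (s : seq nat) : Prop :=
  [/\ 0 < size s,
      (forall i, i.+1 < size s -> nth 0 s i.+1 < nth 0 s i)
    & (1 < size s -> (nth 0 s (size s).-1).+1 < nth 0 s (size s).-2)].

Lemma value_cons a s : abr_value (a :: s) = ((2 ^ a)%:Z - abr_value s)%R.
Proof.
rewrite /abr_value /= big_ord_recl /= expr0 mul1r; congr (_ + _)%R.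
rewrite -sumrN; apply: eq_bigr => i _.
by rewrite /bump /= add1n exprS mulN1r mulNr.
Qed.

Lemma value1 a : abr_value [:: a] = (2 ^ a)%:Z.
Proof. by rewrite value_cons /abr_value big_ord0 subr0. Qed.

Lemma ok_cons a b s : okabr [:: a, b & s] ->
  [/\ okabr (b :: s), b < a & (s = [::] -> b.+1 < a)].
Proof.
case=> _ Hd Hl; split.
- split => //.
  + by move=> i Hi; apply: (Hd i.+1).
  + move=> /= Hs; have := Hl (isT : 1 < (size s).+2).
    by case: s Hs {Hd Hl} => //= c s _.
- exact: (Hd 0).
- by move=> Es; subst s; apply: Hl.
Qed.

Lemma bound s a : okabr (a :: s) ->
  [/\ ((2 ^ a)%:Z < 2 * abr_value (a :: s))%R,
      (abr_value (a :: s) <= (2 ^ a)%:Z)%R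
    & (s != [::] -> (abr_value (a :: s) < (2 ^ a)%:Z)%R)].
Proof.
elim: s a => [|b s IH] a H.
  rewrite value1; split => //. have := expn_gt0 2 a. lia.
have [Hb ltba Hs] := ok_cons H.
have [w1 w2 w3] := IH _ Hb.
rewrite value_cons.
have Hp : (2 ^ b.+1 <= 2 ^ a)%N by rewrite leq_exp2l.
have E1 : (2 ^ b.+1 = 2 * 2 ^ b)%N by rewrite expnS.
case: s Hs w1 w2 w3 {IH H Hb} => [|c s] Hs w1 w2 w3.
  have Hp2 : (2 ^ b.+2 <= 2 ^ a)%N by rewrite leq_exp2l // Hs.
  have E2 : (2 ^ b.+2 = 2 * 2 ^ b.+1)%N by rewrite expnS.
  split => //; lia.
have w4 := w3 isT. split => //; lia.
Qed.

Lemma ceilP (v : int) a : ((2 ^ a)%:Z < 2 * v)%R -> (v <= (2 ^ a)%:Z)%R ->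
  ceil_log2 `|v|%N = a.
Proof.
case: v => [m|m] H1 H2; last by lia.
rewrite /ceil_log2 /=.
case: a H1 H2 => [|a] H1 H2.
  have -> : m = 1 by lia. exact: up_log1.
apply: up_log_eq => //.
have E : (2 ^ a.+1 = 2 * 2 ^ a)%N by rewrite expnS.
apply/andP; split; lia.
Qed.

Lemma ok_drop s i : okabr s -> i < size s -> okabr (drop i s).
Proof.
elim: i s => [|i IH] s H Hi; first by rewrite drop0.
case: s H Hi => [|a [|b s]] //= H Hi.
have [H' _ _] := ok_cons H. exact: IH H' Hi.
Qed.

Lemma value_split s i : i <= size s ->
  abr_value s = (\sum_(j < i) (-1) ^+ j * (2 ^ nth 0 s j)%:Z
                 + (-1) ^+ i * abr_value (drop i s))%R.
Proof.
elim: i s => [|i IH] s Hi.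
  by rewrite big_ord0 drop0 expr0 mul1r add0r.
case: s Hi => [|a s] //= Hi.
rewrite value_cons (IH s Hi) big_ord_recl /= expr0 mul1r.
rewrite -addrA; congr (_ + _)%R.
rewrite opprD -sumrN; congr (_ + _)%R.
  apply: eq_bigr => j _; by rewrite /bump /= add1n exprS mulN1r mulNr.
by rewrite exprS mulN1r mulNr.
Qed.

Lemma rem_drop n s i : n%:Z = abr_value s -> i <= size s ->
  abr_rem n s i = abr_value (drop i s).
Proof.
move=> Hn Hi; rewrite /abr_rem Hn (@value_split s i Hi) addrC addKr mulrA.
by rewrite -exprD -signr_odd oddD addbb expr0 mul1r.
Qed.

Lemma uniq_abr s t : okabr s -> okabr t -> abr_value s = abr_value t -> s = t.
Proof.
elim: s t => [|a s IH] t Hs; first by case: Hs.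
case: t => [|c t] Ht E; first by case: Ht.
have [a1 a2 a3] := bound Hs. have [c1 c2 c3] := bound Ht.
have eac : a = c.
  by rewrite -(@ceilP _ _ a1 a2) -(@ceilP _ _ c1 c2) E.
subst c.
case: s IH Hs a1 a2 a3 E => [|b s] IH Hs a1 a2 a3 E;
case: t Ht c1 c2 c3 E => [|d t] Ht c1 c2 c3 E //.
- have := c3 isT; rewrite -E value1; lia.
- have := a3 isT; rewrite E value1; lia.
have [Hs' _ _] := ok_cons Hs. have [Ht' _ _] := ok_cons Ht.
rewrite (IH _ Hs' Ht') //.
move: E; rewrite !(value_cons a); lia.
Qed.

Theorem lemma19 (n : nat) (s : seq nat) :
  is_ABR n s ->
  [/\ nth 0 s 0 = ceil_log2 n,
      (forall i, 0 < i < size s ->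
         (0 < abr_rem n s i)%R /\ nth 0 s i = ceil_log2 `|abr_rem n s i|%N),
      (forall t, is_ABR n t -> t = s)
    & (1 < size s -> is_ABR (2 ^ nth 0 s 0 - n) (behead s))].
Proof.
case=> H1 H2 H3 Hn.
have Hok : okabr s by [].
case: s H1 H2 H3 Hn Hok => [|a s] // H1 H2 H3 Hn Hok.
have [b1 b2 b3] := bound Hok.
split.
- by rewrite -(@ceilP _ _ b1 b2) -Hn.
- move=> i /andP[i0 iS].
  rewrite (@rem_drop _ _ _ Hn (ltnW iS)).
  have Hd := @ok_drop _ _ Hok iS.
  have -> : nth 0 (a :: s) i = nth 0 (drop i (a :: s)) 0 by rewrite nth_drop addn0.
  case: (drop i (a :: s)) Hd => [|c u] Hd; first by case: Hd.
  have [d1 d2 _] := bound Hd.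
  split; first by have := expn_gt0 2 c; lia.
  by rewrite /= (@ceilP _ _ d1 d2).
- move=> t [t1 t2 t3 tn].
  apply: uniq_abr => //; last by rewrite -tn.
- case: s H1 H2 H3 Hn Hok b1 b2 b3 => [|b s] //= H1 H2 H3 Hn Hok b1 b2 b3 _.
  have [[o1 o2 o3] _ _] := ok_cons Hok.
  split => //.
  move: Hn b2; rewrite !value_cons; lia.
Qed.
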